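(* Let $k\ge 0$ and let $G$ be a graph that is $K_\ell$-free for some $\ell\le k+2$. Then $G$ is an interval graph if and only if $G$ is a bar $k$-visibility graph.
   Context: A bar $k$-visibility representation is a finite collection of pairwise disjoint closed horizontal line segments (bars) in the plane; two bars are joined by a line of sight if there is a vertical segment with endpoints on the two bars intersecting at most $k$ other bars. The bar $k$-visibility graph has one vertex per bar, two vertices adjacent iff their bars are joined by a line of sight. An interval graph here is the graph obtained from such a collection of bars where two bars are adjacent whenever some vertical segment joins them, regardless of how many bars it passes through. A graph is $K_\ell$-free if it contains no complete subgraph on $\ell$ vertices. *)

(* Defs.v *)
From HB Require Import structures.
From mathcomp Require Import all_boot all_order all_algebra.
From mathcomp Require Import Rstruct.
Set Implicit Arguments. Unset Strict Implicit. Unset Printing Implicit Defensive.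
Import Order.TTheory GRing.Theory Num.Theory.
Local Open Scope ring_scope.

Definition coord : realFieldType := Rdefinitions.R.

(* A bar representation indexed by the vertex type V: bar v is the closed
   horizontal segment [bl v, br v] x {by_ v}. *)
Record bars (V : finType) := Bars {
  by_ : V -> coord;
  bl : V -> coord;
  br : V -> coord }.

Definition bars_wf (V : finType) (B : bars V) : Prop :=
  (forall v, bl B v < br B v) /\
  (forall u v, u != v -> by_ B u = by_ B v ->
     br B u < bl B v \/ br B v < bl B u).

Definition on_bar (V : finType) (B : bars V) (v : V) (x : coord) : bool :=
  (bl B v <= x) && (x <= br B v).

(* Bars (other than u, v) met by the closed vertical segment at abscissa x
   joining bars u and v. *)
Definition blockers (V : finType) (B : bars V) (u v : V) (x : coord) : {set V} :=
  [set w | [&& w != u, w != v, on_bar B w x,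
             Num.min (by_ B u) (by_ B v) <= by_ B w
           & by_ B w <= Num.max (by_ B u) (by_ B v)]].

Definition k_sees (k : nat) (V : finType) (B : bars V) (u v : V) : Prop :=
  u != v /\ exists x, [/\ on_bar B u x, on_bar B v x & (#|blockers B u v x| <= k)%N].

Definition int_adj (V : finType) (B : bars V) (u v : V) : Prop :=
  u != v /\ exists x, on_bar B u x /\ on_bar B v x.

Definition simple_graph (V : finType) (e : rel V) : Prop :=
  symmetric e /\ irreflexive e.

Definition is_bar_k_visibility_graph (k : nat) (V : finType) (e : rel V) : Prop :=
  exists B : bars V, bars_wf B /\ forall u v, e u v <-> k_sees k B u v.

Definition is_interval_graph (V : finType) (e : rel V) : Prop :=
  exists B : bars V, bars_wf B /\ forall u v, e u v <-> int_adj B u v.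

Definition K_free (l : nat) (V : finType) (e : rel V) : Prop :=
  ~ exists S : {set V}, #|S| = l /\
      {in S &, forall u v, u != v -> e u v}.

(* Main.v *)
Require Import Defs.
From mathcomp Require Import all_boot all_order all_algebra.
From mathcomp Require Import lra zify.
Set Implicit Arguments. Unset Strict Implicit. Unset Printing Implicit Defensive.
Import Order.TTheory GRing.Theory Num.Theory.
Local Open Scope ring_scope.

Lemma exists_max (V : finType) (f : V -> Defs.coord) (S : {set V}) (a : V) :
  a \in S -> exists2 m, m \in S & forall b, b \in S -> f b <= f m.
Proof.
move=> aS.
case: (@arg_maxP _ _ _ a (fun i => i \in S) f aS) => m mS H.
by exists m => // b bS; apply: H.
Qed.

Lemma subset_card (V : finType) (T : {set V}) (n : nat) :
  (n <= #|T|)%N -> exists S : {set V}, S \subset T /\ #|S| = n.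
Proof.
elim: n => [|n IH] h.
  by exists set0; rewrite sub0set cards0.
have [S [ST cS]] := IH (ltnW h).
have : ~~ (T \subset S).
  apply/negP => TS; have := subset_leq_card TS; rewrite cS; lia.
case/subsetPn => z zT zS.
exists (z |: S); split; first by rewrite subUset sub1set zT ST.
by rewrite cardsU1 zS cS.
Qed.

Lemma btwE (a b c : Defs.coord) : (Num.min a b <= c) && (c <= Num.max a b) =
  ((a <= c) || (b <= c)) && ((c <= a) || (c <= b)).
Proof. by rewrite ge_min le_max. Qed.

Section Core.
Variables (V : finType) (B : bars V).
Hypothesis wf : bars_wf B.
Variables (x lo hi : Defs.coord).

Definition TT := [set w | on_bar B w x && (lo <= by_ B w <= hi)].

Lemma y_inj a b : on_bar B a x -> on_bar B b x -> a != b -> by_ B a != by_ B b.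
Proof.
move=> /andP[h1 h2] /andP[h3 h4] ab; apply/eqP => eq.
case: wf => _ /(_ a b ab eq) []; lra.
Qed.

Definition convex (S : {set V}) := S \subset TT /\
  forall a b w, a \in S -> b \in S -> w \in TT ->
    Num.min (by_ B a) (by_ B b) <= by_ B w <= Num.max (by_ B a) (by_ B b) ->
    w \in S.

Lemma convex_shrink j : (j <= #|TT|)%N -> exists S, convex S /\ #|S| = (#|TT| - j)%N.
Proof.
elim: j => [|j IH] h.
  exists TT; rewrite subn0; split=> //; split=> //.
have [S [[ST cS] cardS]] := IH (ltnW h).
have : (0 < #|S|)%N by rewrite cardS; lia.
case/card_gt0P => a aS.
have [m mS mmax] := exists_max (by_ B) aS.
exists (S :\ m); split; last first.
  move: cardS h; rewrite (cardsD1 m S) mS /=; lia.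
split; first by apply: subset_trans (subsetDl _ _) ST.
move=> a1 b1 w /setD1P[a1m a1S] /setD1P[b1m b1S] wT hw.
apply/setD1P; split; last exact: (cS a1 b1 w).
apply/eqP => wm; subst w.
have mT : m \in TT by apply: (subsetP ST).
have a1T : a1 \in TT by apply: (subsetP ST).
have b1T : b1 \in TT by apply: (subsetP ST).
move: mT a1T b1T; rewrite !inE => /andP[om _] /andP[oa _] /andP[ob _].
have ha := mmax a1 a1S; have hb := mmax b1 b1S.
have na := y_inj oa om a1m; have nb := y_inj ob om b1m.
move: hw; rewrite btwE => /andP[_ /orP[] h2].
  by move: na; rewrite eq_le ha h2.
by move: nb; rewrite eq_le hb h2.
Qed.

Lemma convex_blockers S a b : convex S -> a \in S -> b \in S ->
  blockers B a b x \subset S :\ a :\ b.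
Proof.
case=> ST cS aS bS; apply/subsetP => w; rewrite inE => /and5P[wa wb ow h1 h2].
rewrite !inE wa wb /=.
apply: (cS a b w) => //; last by rewrite h1 h2.
have aT : a \in TT by apply: (subsetP ST).
have bT : b \in TT by apply: (subsetP ST).
move: aT bT; rewrite !inE ow /= => /andP[_ /andP[la ha]] /andP[_ /andP[lb hb]].
move: h1 h2; rewrite ge_min le_max => /orP[] h1 /orP[] h2; apply/andP; split; lra.
Qed.

End Core.

Lemma TT_card (V : finType) (B : bars V) u v x :
  on_bar B u x -> on_bar B v x -> u != v ->
  (#|blockers B u v x| + 2 <= #|TT B x (Num.min (by_ B u) (by_ B v)) (Num.max (by_ B u) (by_ B v))|)%N.
Proof.
move=> ou ov uv; set T := TT _ _ _ _.
have uT : u \in T by rewrite inE ou /= ge_min le_max lexx /= ?orbT.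
have vT : v \in T by rewrite inE ov /= ge_min le_max lexx /= ?orbT.
have sub : blockers B u v x \subset T :\ u :\ v.
  apply/subsetP => w; rewrite !inE => /and5P[-> -> -> -> ->]. by [].
have := subset_leq_card sub.
have vTu : v \in T :\ u by rewrite in_setD1 eq_sym uv vT.
rewrite (cardsD1 u T) uT (cardsD1 v (T :\ u)) vTu /=.
lia.
Qed.

Lemma on_TT (V : finType) (B : bars V) x lo hi w : w \in TT B x lo hi -> on_bar B w x.
Proof. by rewrite inE => /andP[]. Qed.

Theorem mainTheorem11 (k : nat) (V : finType) (e : rel V) :
  simple_graph e ->
  (exists l : nat, (l <= k + 2)%N /\ K_free l e) ->
  (is_interval_graph e <-> is_bar_k_visibility_graph k e).
Proof.
move=> _ [l [hl Kf]]; split.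
- case=> B [wf hB]; exists B; split=> // u v; rewrite hB; split; last first.
    by case=> uv [x [ou ov _]]; split=> //; exists x.
  case=> uv [x [ou ov]]; split=> //; exists x; split=> //.
  rewrite leqNgt; apply/negP => hk.
  have hT := TT_card ou ov uv; move: hT => /=.
  set T := TT _ _ _ _ => hT.
  have [S [ST cS]] := @subset_card _ T l ltac:(lia).
  apply: Kf; exists S; split=> // a b aS bS ab; apply/hB; split=> //.
  exists x; split; apply: on_TT; apply: (subsetP ST); eassumption.
- case=> B [wf hB]; exists B; split=> // u v; rewrite hB; split.
    by case=> uv [x [ou ov _]]; split=> //; exists x.
  case=> uv [x [ou ov]]; split=> //; exists x; split=> //.
  rewrite leqNgt; apply/negP => hk.
  have hT := TT_card ou ov uv; move: hT => /=.
  set T := TT _ _ _ _ => hT.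
  have [S [cvx cS]] : exists S, convex B x (Num.min (by_ B u) (by_ B v))
     (Num.max (by_ B u) (by_ B v)) S /\ #|S| = (#|T| - (#|T| - l))%N.
    by apply: convex_shrink => //; rewrite -/T; lia.
  have cS' : #|S| = l by rewrite cS; lia.
  apply: Kf; exists S; split=> // a b aS bS ab; apply/hB; split=> //.
  have ST := cvx.1.
  exists x; split; try (apply: on_TT; apply: (subsetP ST); eassumption).
  have := subset_leq_card (convex_blockers cvx aS bS).
  have bSa : b \in S :\ a by rewrite in_setD1 eq_sym ab bS.
  rewrite (cardsD1 a S) aS (cardsD1 b (S :\ a)) bSa /= in cS'.
  lia.
Qed.
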